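(* Let $\mathcal H$ be an $As^c$-$Mag$-bialgebra, $x\in\mathrm{Prim}\,\mathcal H$ and $y,z\in\bar{\mathcal H}$. Writing $\delta(z)=\sum z_{(1)}\otimes z_{(2)}$, one has $$\delta(as(x,y,z))=\sum as(x,y,z_{(1)})\otimes z_{(2)}.$$
   Context: An $As^c$-$Mag$-bialgebra is a vector space $\mathcal H$ over a field $\mathbb K$ with a bilinear product $\cdot$ (not assumed associative) with two-sided unit $1$ and a coassociative counital coproduct $\Delta$ with $\Delta(1)=1\otimes1$ and $\Delta(x\cdot y)=\Delta(x)\cdot(1\otimes y)+(x\otimes1)\cdot\Delta(y)-x\otimes y$, the product on $\mathcal H\otimes\mathcal H$ being componentwise. $\bar{\mathcal H}$ is the kernel of the counit, $\delta(x)=\Delta(x)-x\otimes1-1\otimes x$ is the reduced coproduct on $\bar{\mathcal H}$, and $\mathrm{Prim}\,\mathcal H=\ker\delta$. The associator is $as(x,y,z)=(x\cdot y)\cdot z-x\cdot(y\cdot z)$. *)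

(* Defs.v *)
From HB Require Import structures.
From mathcomp Require Import all_boot all_order all_algebra.
Set Implicit Arguments. Unset Strict Implicit. Unset Printing Implicit Defensive.
Import GRing.Theory.
Local Open Scope ring_scope.

(* Tensors in H (x) H are represented by finite formal sums
   [:: (a_1,b_1); ...; (a_n,b_n)] meaning sum_i a_i (x) b_i.  Two such
   representatives denote the same element of H (x) H iff every bilinear
   form phi : H x H -> K takes the same value on them (over a field,
   (H (x) H)^* = Bil(H,H;K) separates points).  Same for H (x) H (x) H. *)

Section Tensors.
Variables (K : fieldType) (H : lmodType K).

Definition bilinear_form (phi : H -> H -> K) : Prop :=
  (forall (a : K) (x y z : H), phi (a *: x + y) z = a * phi x z + phi y z) /\
  (forall (a : K) (x y z : H), phi z (a *: x + y) = a * phi z x + phi z y).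

Definition trilinear_form (psi : H -> H -> H -> K) : Prop :=
  (forall (a : K) (x y u v : H), psi (a *: x + y) u v = a * psi x u v + psi y u v) /\
  (forall (a : K) (x y u v : H), psi u (a *: x + y) v = a * psi u x v + psi u y v) /\
  (forall (a : K) (x y u v : H), psi u v (a *: x + y) = a * psi u v x + psi u v y).

Definition tev (phi : H -> H -> K) (t : seq (H * H)) : K :=
  \sum_(p <- t) phi p.1 p.2.

Definition tev3 (psi : H -> H -> H -> K) (t : seq (H * H * H)) : K :=
  \sum_(p <- t) psi p.1.1 p.1.2 p.2.

Definition teq (t t' : seq (H * H)) : Prop :=
  forall phi, bilinear_form phi -> tev phi t = tev phi t'.

Definition teq3 (t t' : seq (H * H * H)) : Prop :=
  forall psi, trilinear_form psi -> tev3 psi t = tev3 psi t'.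

Variables (mul : H -> H -> H) (one : H) (Delta : H -> seq (H * H)) (eps : H -> K).

Record AscMagBialgebra : Prop := {
  mul_linl : forall (a : K) (x y z : H), mul (a *: x + y) z = a *: mul x z + mul y z;
  mul_linr : forall (a : K) (x y z : H), mul z (a *: x + y) = a *: mul z x + mul z y;
  mul1x : forall x, mul one x = x;
  mulx1 : forall x, mul x one = x;
  Delta_lin : forall (a : K) (x y : H),
    teq (Delta (a *: x + y)) ([seq (a *: p.1, p.2) | p <- Delta x] ++ Delta y);
  eps_lin : forall (a : K) (x y : H), eps (a *: x + y) = a * eps x + eps y;
  Delta_coass : forall x,
    teq3 (flatten [seq [seq (q.1, q.2, p.2) | q <- Delta p.1] | p <- Delta x])
         (flatten [seq [seq (p.1, q.1, q.2) | q <- Delta p.2] | p <- Delta x]);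
  counit_l : forall x, \sum_(p <- Delta x) eps p.1 *: p.2 = x;
  counit_r : forall x, \sum_(p <- Delta x) eps p.2 *: p.1 = x;
  Delta_one : teq (Delta one) [:: (one, one)];
  Delta_mul : forall x y,
    teq (Delta (mul x y))
        ([seq (mul p.1 one, mul p.2 y) | p <- Delta x] ++
         [seq (mul x p.1, mul one p.2) | p <- Delta y] ++
         [:: (- x, y)])
}.

Definition rdelta (x : H) : seq (H * H) :=
  Delta x ++ [:: (- x, one); (- one, x)].

Definition in_barH (x : H) : Prop := eps x = 0.

Definition is_prim (x : H) : Prop := in_barH x /\ teq (rdelta x) [::].

Definition assoc3 (x y z : H) : H := mul (mul x y) z - mul x (mul y z).

End Tensors.

(* Main.v *)
Require Import Defs.
From mathcomp Require Import all_boot all_order all_algebra.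
From mathcomp Require Import ring.
Local Open Scope ring_scope.
Import GRing.Theory.
Set Implicit Arguments.

Section Aux.
Variables (K : fieldType) (H : lmodType K).

Definition lin (f : H -> H) := forall (a : K) x y, f (a *: x + y) = a *: f x + f y.

Lemma lin0 f : lin f -> f 0 = 0.
Proof.
move=> hf; have := hf 1 0 0; rewrite !scale1r addr0 => e.
by apply/(addrI (f 0)); rewrite addr0 -e.
Qed.

Lemma linN f : lin f -> forall x, f (- x) = - f x.
Proof. by move=> hf x; have := hf (-1) x 0; rewrite addr0 lin0 // addr0 !scaleN1r. Qed.

Lemma lin_id : lin id. Proof. by []. Qed.

Lemma lin_comp f g : lin f -> lin g -> lin (fun x => f (g x)).
Proof. by move=> hf hg a x y; rewrite hg hf. Qed.

Lemma bilL0 (phi : H -> H -> K) : bilinear_form phi -> forall z, phi 0 z = 0.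
Proof.
move=> [hl hr] z; have := hl 1 0 0 z; rewrite !scale1r addr0 mul1r => e.
by apply/(addrI (phi 0 z)); rewrite addr0 -e.
Qed.

Lemma bilR0 (phi : H -> H -> K) : bilinear_form phi -> forall z, phi z 0 = 0.
Proof.
move=> [hl hr] z; have := hr 1 0 0 z; rewrite !scale1r addr0 mul1r => e.
by apply/(addrI (phi z 0)); rewrite addr0 -e.
Qed.

Lemma bilLN (phi : H -> H -> K) : bilinear_form phi -> forall x z, phi (- x) z = - phi x z.
Proof.
move=> hp x z; have := hp.1 (-1) x 0 z; rewrite addr0 bilL0 // addr0 scaleN1r => ->.
by rewrite mulN1r.
Qed.

Lemma bilRN (phi : H -> H -> K) : bilinear_form phi -> forall x z, phi z (- x) = - phi z x.
Proof.
move=> hp x z; have := hp.2 (-1) x 0 z; rewrite addr0 bilR0 // addr0 scaleN1r => ->.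
by rewrite mulN1r.
Qed.

Lemma bilLB (phi : H -> H -> K) : bilinear_form phi -> forall x y z, phi (x - y) z = phi x z - phi y z.
Proof.
move=> hp x y z; have := hp.1 1 x (- y) z; rewrite scale1r mul1r => ->.
by rewrite bilLN.
Qed.

Lemma bilRB (phi : H -> H -> K) : bilinear_form phi -> forall x y z, phi z (x - y) = phi z x - phi z y.
Proof.
move=> hp x y z; have := hp.2 1 x (- y) z; rewrite scale1r mul1r => ->.
by rewrite bilRN.
Qed.

Lemma bilLZ (phi : H -> H -> K) : bilinear_form phi -> forall a x z, phi (a *: x) z = a * phi x z.
Proof.
by move=> hp a x z; have := hp.1 a x 0 z; rewrite addr0 bilL0 // addr0.
Qed.

Lemma bil_comp (phi : H -> H -> K) f g : bilinear_form phi -> lin f -> lin g ->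
  bilinear_form (fun a b => phi (f a) (g b)).
Proof.
move=> [hl hr] hf hg; split=> a x y z; first by rewrite hf hl.
by rewrite hg hr.
Qed.

Lemma bil_r (phi : H -> H -> K) g : bilinear_form phi -> lin g ->
  bilinear_form (fun a b => phi a (g b)).
Proof. by move=> hp hg; exact: (bil_comp hp (@lin_id) hg). Qed.

Lemma bil_l (phi : H -> H -> K) f : bilinear_form phi -> lin f ->
  bilinear_form (fun a b => phi (f a) b).
Proof. by move=> hp hf; exact: (bil_comp hp hf (@lin_id)). Qed.

End Aux.
Arguments lin {K H}.

Section Main.
Variables (K : fieldType) (H : lmodType K) (mul : H -> H -> H) (one : H)
  (Delta : H -> seq (H * H)) (eps : H -> K).
Hypothesis HB : AscMagBialgebra mul one Delta eps.

Lemma linl v : lin (fun a => mul a v).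
Proof. by move=> a x y; rewrite (mul_linl HB). Qed.
Lemma linr u : lin (fun a => mul u a).
Proof. by move=> a x y; rewrite (mul_linr HB). Qed.

Lemma Dmul (psi : H -> H -> K) u v : bilinear_form psi ->
  tev psi (Delta (mul u v)) = tev (fun a b => psi a (mul b v)) (Delta u)
     + tev (fun a b => psi (mul u a) b) (Delta v) - psi u v.
Proof.
move=> hp; rewrite (Delta_mul HB u v hp) /tev !big_cat /= !big_map big_cons big_nil addr0.
under eq_bigr => p _ do rewrite (mulx1 HB).
under [X in _ + (X + _)]eq_bigr => p _ do rewrite (mul1x HB).
by rewrite bilLN // addrA.
Qed.

Lemma Dprim (psi : H -> H -> K) x : is_prim one Delta eps x -> bilinear_form psi ->
  tev psi (Delta x) = psi x one + psi one x.
Proof.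
move=> [_ hx] hp; have := hx psi hp; rewrite /tev /rdelta big_cat /= !big_cons big_nil.
rewrite addr0 !bilLN // => /eqP; rewrite -/(tev psi (Delta x)) addrA subr_eq0 subr_eq => /eqP ->.
by rewrite addrC.
Qed.

Lemma Dxv (psi : H -> H -> K) x v : is_prim one Delta eps x -> bilinear_form psi ->
  tev psi (Delta (mul x v)) = psi one (mul x v) + tev (fun a b => psi (mul x a) b) (Delta v).
Proof.
move=> hx hp; rewrite Dmul // (Dprim hx); last first.
  exact: (bil_r hp (linl v)).
by rewrite (mul1x HB) addrC !addrA addNr add0r.
Qed.

Lemma assocN x y w : assoc3 mul x y (- w) = - assoc3 mul x y w.
Proof.
rewrite /assoc3 (linN (linr _)) (linN (linr y)) (linN (linr x)).
by rewrite opprB opprK addrC.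
Qed.

Lemma assoc1 x y : assoc3 mul x y one = 0.
Proof. by rewrite /assoc3 !(mulx1 HB) subrr. Qed.

Lemma Das x y z (psi : H -> H -> K) : is_prim one Delta eps x -> bilinear_form psi ->
  tev psi (Delta (assoc3 mul x y z)) =
  psi one (assoc3 mul x y z) + \sum_(p <- Delta z) psi (assoc3 mul x y p.1) p.2.
Proof.
move=> hx hp.
have E : assoc3 mul x y z = (-1) *: mul x (mul y z) + mul (mul x y) z.
  by rewrite scaleN1r addrC.
rewrite {1}E (Delta_lin HB _ _ _ hp) /tev big_cat big_map /=.
under eq_bigr => p _ do rewrite bilLZ //.
rewrite -mulr_sumr mulN1r.
rewrite -/(tev psi (Delta (mul x (mul y z)))) -/(tev psi (Delta (mul (mul x y) z))).
rewrite (Dmul (mul x y) z hp) (Dxv y hx (bil_r hp (linl z))).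
rewrite (Dxv (mul y z) hx hp) (Dmul y z (bil_l hp (linr x))).
rewrite /assoc3 (bilRB hp).
under [X in _ = _ + X]eq_bigr => p _ do rewrite (bilLB hp).
rewrite sumrB /tev /=.
ring.
Qed.

End Main.
Unset Implicit Arguments.

Theorem lemma2p7 (K : fieldType) (H : lmodType K) (mul : H -> H -> H) (one : H)
  (Delta : H -> seq (H * H)) (eps : H -> K) :
  AscMagBialgebra mul one Delta eps ->
  forall x y z : H,
    is_prim one Delta eps x -> in_barH eps y -> in_barH eps z ->
    teq (rdelta one Delta (assoc3 mul x y z))
        [seq (assoc3 mul x y p.1, p.2) | p <- rdelta one Delta z].
Proof.
move=> HB x y z hx hy hz phi hp.
rewrite /tev /rdelta !big_cat /= !big_cons !big_nil !addr0 big_map.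
rewrite -/(tev phi (Delta (assoc3 mul x y z))) (Das HB y z hx hp).
rewrite big_cat /= !big_cons big_nil addr0 (assocN HB) (assocN HB) (assoc1 HB) oppr0 (bilL0 hp) addr0 !(bilLN hp).
ring.
Qed.
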